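(* For all $f\in\mathbb{F}_2[x]\setminus\{0\}$ it holds that $\tau(f)\le 2\deg(f)^{1.5}+1$.
   Context: Define $T:\mathbb{F}_2[x]\to\mathbb{F}_2[x]$ by $T(f)=\frac{f}{x+1}$ if $f(1)=0$ and $T(f)=\frac{xf+1}{x+1}$ if $f(1)=1$. For nonzero $f$, $\tau(f)$ is the least $k\in\mathbb{N}$ with $T^k(f)=1$. *)

(* Defs.v *)
From mathcomp Require Import all_boot all_algebra.
From Stdlib Require Import Reals.
Set Implicit Arguments. Unset Strict Implicit. Unset Printing Implicit Defensive.
Import GRing.Theory.
Local Open Scope ring_scope.

Notation F2poly := {poly 'F_2}.

(* T(f) = f/(x+1) if f(1)=0, and (x f + 1)/(x+1) if f(1)=1.
   In both cases the division is exact. *)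
Definition T (f : F2poly) : F2poly :=
  if f.[1] == 0 then f %/ ('X + 1)
  else ('X * f + 1) %/ ('X + 1).

Definition deg (f : F2poly) : nat := (size f).-1.

Definition is_tau (f : F2poly) (k : nat) : Prop :=
  iter k T f = 1 /\ (forall j : nat, is_true (leq j.+1 k) -> iter j T f <> 1).

(* Main.v *)
Require Import Defs.
From mathcomp Require Import all_boot all_algebra.
From mathcomp Require Import zify.
From Stdlib Require PeanoNat.
Set Implicit Arguments. Unset Strict Implicit. Unset Printing Implicit Defensive.
Import GRing.Theory.
Local Open Scope ring_scope.
Implicit Types (u h p g f : {poly 'F_2}).

Lemma F2_11 : (1 + 1 = 0 :> 'F_2). Proof. by apply/eqP. Qed.
Lemma F2_N1 : (- 1 = 1 :> 'F_2). Proof. by apply/eqP. Qed.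
Lemma F2_cases (x : 'F_2) : x = 0 \/ x = 1.
Proof. case: x => [[|[|]]] //= Hx. left; exact/val_inj. right; exact/val_inj. Qed.
Lemma F2_neq0 (x : 'F_2) : x != 0 -> x = 1.
Proof. by case: (F2_cases x) => ->; rewrite ?eqxx. Qed.
Lemma F2_xx (x : 'F_2) : x + x = 0.
Proof. by case: (F2_cases x) => ->; rewrite ?addr0 ?F2_11. Qed.
Lemma poly_xx (p : {poly 'F_2}) : p + p = 0.
Proof. by apply/polyP => i; rewrite coefD F2_xx coef0. Qed.

Definition Dp (h : {poly 'F_2}) := drop_poly 1 h.
Definition Op (h : {poly 'F_2}) := h + Dp h.
Definition Ty (h : {poly 'F_2}) := if h`_0 == 0 then Dp h else Op h.
Definition Reach (h : {poly 'F_2}) (n : nat) := iter n Ty h = 1.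

Lemma coefDp h i : (Dp h)`_i = h`_i.+1.
Proof. by rewrite /Dp coef_drop_poly addn1. Qed.
Lemma coefOp h i : (Op h)`_i = h`_i + h`_i.+1.
Proof. by rewrite /Op coefD coefDp. Qed.
Lemma DpD p q : Dp (p + q) = Dp p + Dp q.
Proof. exact: drop_polyD. Qed.
Lemma OpD p q : Op (p + q) = Op p + Op q.
Proof. by rewrite /Op DpD addrACA. Qed.
Lemma DpO h : Dp (Op h) = Op (Dp h).
Proof. by rewrite /Op DpD. Qed.
Lemma drop_drop m n (p : {poly 'F_2}) : drop_poly m (drop_poly n p) = drop_poly (m + n) p.
Proof. by apply/polyP => i; rewrite !coef_drop_poly addnA. Qed.
Lemma iterDpO k h : Dp (iter k Op h) = iter k Op (Dp h).
Proof. by elim: k => //= k IH; rewrite DpO IH. Qed.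
Lemma iterOpD k p q : iter k Op (p + q) = iter k Op p + iter k Op q.
Proof. by elim: k => //= k IH; rewrite IH OpD. Qed.
Lemma size_Dp h : size (Dp h) = (size h).-1.
Proof. by rewrite /Dp size_drop_poly subn1. Qed.
Lemma size_Op h : size (Op h) = size h.
Proof.
have [->|hn0] := eqVneq h 0; first by rewrite /Op /Dp drop_poly0r addr0.
rewrite /Op size_addl // size_Dp.
by have := size_poly_gt0 h; rewrite hn0; case: (size h).
Qed.
Lemma size_iterOp k h : size (iter k Op h) = size h.
Proof. by elim: k => //= k IH; rewrite size_Op IH. Qed.
Lemma iterDp k h : iter k Dp h = drop_poly k h.
Proof.
elim: k h => [|k IH] h; first by rewrite drop_poly0l.
by rewrite iterSr IH /Dp drop_drop addn1.
Qed.


Lemma iterOp_pow2 s h : iter (expn 2 s) Op h = h + drop_poly (expn 2 s) h.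
Proof.
elim: s h => [|s IH] h; first by [].
rewrite expnS mul2n -addnn iterD (IH h) iterOpD !IH drop_drop addrA.
by rewrite -(addrA h) poly_xx addr0.
Qed.
Lemma iterOp_period s (h : {poly 'F_2}) : (size h <= expn 2 s)%N -> iter (expn 2 s) Op h = h.
Proof. by move=> hs; rewrite iterOp_pow2 drop_poly_eq0 // addr0. Qed.

Lemma Ty1 : Ty 1 = 1.

Proof.
rewrite /Ty coef1 /= /Op /Dp drop_poly_eq0 ?addr0 //.
by rewrite size_poly1.
Qed.
Lemma Reach1 n : Reach 1 n.
Proof. by elim: n => //= n; rewrite /Reach /= => ->; exact: Ty1. Qed.
Lemma Reach_up h n n' : Reach h n -> (n <= n')%N -> Reach h n'.
Proof.
move=> Hr Hn; rewrite /Reach -(subnK Hn) iterD.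
by have := Reach1 (n' - n); rewrite /Reach => <-; rewrite Hr.
Qed.
Lemma Reach_step h m y n : iter m Ty h = y -> Reach y n -> Reach h (n + m).
Proof. by rewrite /Reach iterD => ->. Qed.

Lemma F2_1n0 : (1 == 0 :> 'F_2) = false. Proof. by []. Qed.

Lemma gap n u : (0 < n)%N -> u`_0 = 1 -> (forall t, (0 < t < n)%N -> u`_t = 0) -> u`_n = 1 ->
  (forall j, (j < n)%N -> (iter j Op u)`_0 = 1) /\ (iter n Op u)`_0 = 0.
Proof.
elim: n u => // n IH u _ u0 ut un.
case: n IH un ut => [|n] IH un ut.
  split; first by move=> j; rewrite ltnS leqn0 => /eqP ->.
  by rewrite /= coefOp u0 un F2_11.
have O0 : (Op u)`_0 = 1 by rewrite coefOp u0 ut ?addr0.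
have Ot : forall t, (0 < t < n.+1)%N -> (Op u)`_t = 0.
  by move=> t Ht; rewrite coefOp !ut ?addr0 //; lia.
have On : (Op u)`_n.+1 = 1 by rewrite coefOp un ut ?add0r //; lia.
have [H1 H2] := IH (Op u) isT O0 Ot On.
split; last by rewrite iterSr.
by case=> [|j] Hj //; rewrite iterSr H1.
Qed.

Lemma first_one u : (1 < size u)%N -> u`_0 = 1 ->
  exists n, [/\ (0 < n)%N, (n < size u)%N, u`_n = 1 & forall t, (0 < t < n)%N -> u`_t = 0].
Proof.
move=> su u0.
have ex : exists t, (0 < t)%N && (u`_t == 1).
  exists (size u).-1; apply/andP; split; first by lia.
  apply/eqP/F2_neq0; have := lead_coef_eq0 u; rewrite /lead_coef => ->.
  by rewrite -size_poly_eq0; lia.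
case: (ex_minnP ex) => n /andP[n0 /eqP un] nmin.
exists n; split => //.
  rewrite ltnNge; apply/negP => Hn.
  by move: un; rewrite nth_default // => /eqP; rewrite eq_sym F2_1n0.
move=> t Ht; case: (F2_cases u`_t) => // Hut.
have := nmin t; rewrite Hut eqxx andbT => /(_ ltac:(lia)); lia.
Qed.

Lemma run_exists u : (1 < size u)%N ->
  exists k, (forall j, (j < k)%N -> (iter j Op u)`_0 = 1) /\ (iter k Op u)`_0 = 0.
Proof.
move=> su; case: (F2_cases u`_0) => u0; first by exists 0%N.
have [n [n0 _ un ut]] := first_one su u0.
by exists n; apply: gap.
Qed.

Lemma iterTy_run k u : (forall j, (j < k)%N -> (iter j Op u)`_0 = 1) ->
  forall j, (j <= k)%N -> iter j Ty u = iter j Op u.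
Proof.
move=> H; elim=> // j IH Hj.
by rewrite iterS IH ?(ltnW Hj) // /Ty H // F2_1n0 iterS.
Qed.

Lemma Ty0 : Ty 0 = 0.
Proof. by rewrite /Ty coef0 eqxx /Dp drop_poly0r. Qed.
Lemma notReach0 n : ~ Reach 0 n.
Proof.
rewrite /Reach; have -> : iter n Ty 0 = 0 by elim: n => //= n ->; exact: Ty0.
by move/eqP; rewrite eq_sym oner_eq0.
Qed.
Lemma size1_eq1 (p : {poly 'F_2}) : size p = 1%N -> p = 1.
Proof.
move=> sp; rewrite [p]size1_polyC ?sp //.
have : p`_0 != 0 by have := lead_coef_eq0 p; rewrite /lead_coef sp /= -size_poly_eq0 sp => ->.
by move/F2_neq0 => ->.
Qed.
Lemma neq1_size (p : {poly 'F_2}) : (1 < size p)%N -> p != 1.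
Proof. by move=> sp; apply/eqP => E; move: sp; rewrite E size_poly1. Qed.

Definition Mon1 h := forall n, Reach (Op h) n -> Reach h n.+1.

Lemma monk S : (forall h, (size h < S)%N -> Mon1 h) ->
  forall k h n, (size h < S)%N -> Reach (iter k Op h) n -> Reach h (n + k).
Proof.
move=> H; elim=> [|k IH] h n hs; first by rewrite addn0.
rewrite iterSr => /IH; rewrite size_Op => /(_ hs) /(H h hs).
by rewrite addnS.
Qed.

Lemma mon1 h : Mon1 h.
Proof.
move: {2}(size h) (leqnn (size h)) => S; elim: S h => [|S IH] h hS n.
  by move: hS; rewrite leqn0 size_poly_eq0 => /eqP ->; rewrite /Op /Dp drop_poly0r addr0 => /notReach0.
have [->|hn0] := eqVneq h 0; first by rewrite /Op /Dp drop_poly0r addr0 => /notReach0.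
case h0: (h`_0 == 0); last first.
  by rewrite /Reach iterSr /Ty h0.
have sh : (1 < size h)%N.
  case: (ltngtP (size h) 1) => // [|sh1].
    by rewrite ltnS leqn0 size_poly_eq0 (negPf hn0).
  by move: h0; rewrite (size1_eq1 sh1) coef1 eqxx /= F2_1n0.
set h1 := Op h => Rh1.
have sh1 : size h1 = size h by rewrite size_Op.
have [k [Hk1 Hk0]] := run_exists (ltac:(by rewrite sh1) : (1 < size h1)%N).
have run := iterTy_run Hk1.
have kn : (k < n)%N.
  rewrite ltnNge; apply/negP => nk; move: Rh1; rewrite /Reach run //.
  by apply/eqP; apply: neq1_size; rewrite size_iterOp sh1.
have step : iter k.+1 Ty h1 = iter k.+1 Op (Dp h).
  by rewrite iterS run // /Ty Hk0 eqxx iterDpO DpO iterSr.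
have R2 : Reach (iter k.+1 Op (Dp h)) (n - k.+1).
  have E : n = (n - k.+1 + k.+1)%N by rewrite subnK.
  by move: Rh1; rewrite /Reach {1}E iterD step.
have sD : (size (Dp h) < S.+1)%N by rewrite size_Dp; lia.
have := monk (S := S.+1) (fun h' hs' => IH h' ltac:(lia)) sD R2.
rewrite subnK // => RD.
by rewrite /Reach iterSr /Ty h0.
Qed.

Lemma monK k h n : Reach (iter k Op h) n -> Reach h (n + k).
Proof. by apply: (monk (S := (size h).+1)) => // h' _; exact: mon1. Qed.

Lemma main s K : (expn 2 s <= K * K.+1)%N ->
  forall i h, size h = i.+1 -> (i <= expn 2 s)%N -> Reach h (i + K * i).
Proof.
move=> HK; elim/ltn_ind => i IH h sh iP.
case: i IH sh iP => [|i] IH sh iP.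
  by rewrite (size1_eq1 sh); exact: Reach1.
have s2 : (1 < size h)%N by rewrite sh.
case: (F2_cases h`_0) => h0.
  have sD : size (Dp h) = i.+1 by rewrite size_Dp sh.
  have R := IH i (ltnSn i) (Dp h) sD ltac:(lia).
  have T1 : iter 1 Ty h = Dp h by rewrite /= /Ty h0 eqxx.
  apply: Reach_up (Reach_step T1 R) _.
  by rewrite mulnS; lia.
have [r [r0 rs hr hrt]] := first_one s2 h0.
have [G1 G0] := gap r0 h0 hrt hr.
have run := iterTy_run G1.
set g := Dp h.
have sg : size g = i.+1 by rewrite size_Dp sh.
have stepr : iter r.+1 Ty h = iter r Op g by rewrite iterS run // /Ty G0 eqxx iterDpO.
case: (leqP r K) => rK.
  have sO : size (iter r Op g) = i.+1 by rewrite size_iterOp.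
  have R := IH i (ltnSn i) _ sO ltac:(lia).
  apply: Reach_up (Reach_step stepr R) _.
  by rewrite mulnS; lia.
have gt : forall t, (t < r.-1)%N -> g`_t = 0 by move=> t Ht; rewrite coefDp hrt //; lia.
have Ty_g : forall j, (j <= r.-1)%N -> iter j Ty g = iter j Dp g.
  elim=> // j IHj Hj; rewrite iterS IHj ?(ltnW Hj) // /Ty.
  rewrite iterDp coef_drop_poly add0n gt // eqxx -iterDp iterS. done.
set g' := iter r.-1 Dp g.
have sg' : size g' = (i - r.-1).+1 by rewrite /g' iterDp size_drop_poly sg; lia.
have R' := IH (i - r.-1)%N ltac:(lia) g' sg' ltac:(lia).
have Rg := Reach_step (Ty_g r.-1 (leqnn _)) R'.
have per : iter (expn 2 s - r) Op (iter r Op g) = g.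
  by rewrite -iterD subnK ?iterOp_period ?sg //; lia.
have RO : Reach (iter r Op g) ((i - r.-1 + K * (i - r.-1) + r.-1) + (expn 2 s - r)).
  by apply: monK; rewrite per.
apply: Reach_up (Reach_step stepr RO) _.
have KK : (K * K.+1 <= K * r)%N by rewrite leq_mul2l rK orbT.
have E : (K * (i - r.-1) + K * r = K * i.+1)%N.
  by rewrite -mulnDr; congr (K * _)%N; lia.
move: HK KK E; set P := (expn 2 s)%N; set A := (K * (i - r.-1))%N; set B := (K * r)%N.
set Q := (K * K.+1)%N; set C := (K * i.+1)%N. lia.
Qed.

Definition sgm f := f \Po ('X + 1).

Lemma XaddC_F2 : ('X + 1) \Po ('X + 1) = 'X :> {poly 'F_2}.
Proof.
by rewrite comp_polyD comp_polyX -polyC1 comp_polyC -addrA -polyCD F2_11 addr0.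
Qed.
Lemma sgmK f : sgm (sgm f) = f.
Proof. by rewrite /sgm -comp_polyA XaddC_F2 comp_polyXr. Qed.
Lemma sgm1 : sgm 1 = 1.
Proof. by rewrite /sgm -polyC1 comp_polyC. Qed.
Lemma size_sgm f : size (sgm f) = size f.
Proof. by rewrite /sgm size_comp_poly2 // -polyC1 size_XaddC. Qed.
Lemma sgm_0 f : (sgm f)`_0 = f.[1].
Proof. by rewrite -horner_coef0 /sgm horner_comp !hornerE. Qed.
Lemma sgmM p q : sgm (p * q) = sgm p * sgm q.
Proof. by rewrite /sgm comp_polyM. Qed.
Lemma sgmD p q : sgm (p + q) = sgm p + sgm q.
Proof. by rewrite /sgm comp_polyD. Qed.
Lemma sgmX : sgm 'X = 'X + 1.
Proof. by rewrite /sgm comp_polyX. Qed.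
Lemma sgmXaddC : sgm ('X + 1) = 'X.
Proof. exact: XaddC_F2. Qed.
Lemma XsubF2 : 'X - 1%:P = 'X + 1 :> {poly 'F_2}.
Proof. by rewrite -polyCN F2_N1 polyC1. Qed.
Lemma DpMX p : Dp (p * 'X) = p.
Proof. by rewrite /Dp -(expr1 'X) drop_polyMXn_id. Qed.
Lemma Dp1 : Dp 1 = 0.
Proof. by rewrite /Dp drop_poly_eq0 // size_poly1. Qed.
Lemma XaddC_neq0 : ('X + 1 : {poly 'F_2}) != 0.
Proof. by rewrite -size_poly_eq0 -polyC1 size_XaddC. Qed.

Lemma sgm_T f : sgm (T f) = Ty (sgm f).
Proof.
rewrite /T /Ty sgm_0.
case: (F2_cases f.[1]) => f1; rewrite f1 ?eqxx ?F2_1n0.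
  have /factor_theorem [q Hq] : root f 1 by rewrite /root f1.
  rewrite XsubF2 in Hq.
  by rewrite Hq mulpK ?XaddC_neq0 // sgmM sgmXaddC DpMX.
have /factor_theorem [q Hq] : root ('X * f + 1) 1.
  by rewrite /root !hornerE f1 ?mul1r F2_11.
rewrite XsubF2 in Hq.
rewrite Hq mulpK ?XaddC_neq0 //.
have : sgm ('X * f + 1) = sgm q * 'X by rewrite Hq sgmM sgmXaddC.
rewrite sgmD sgmM sgmX sgm1 => E.
by rewrite -(DpMX (sgm q)) -E !DpD Dp1 addr0 mulrDl mul1r DpD (mulrC 'X) DpMX.
Qed.

Lemma iter_sgm n f : sgm (iter n T f) = iter n Ty (sgm f).
Proof. by elim: n => //= n IH; rewrite sgm_T IH. Qed.
Lemma reach_T f n : Reach (sgm f) n -> iter n T f = 1.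
Proof. by rewrite /Reach -iter_sgm => H; rewrite -[iter n T f]sgmK H sgm1. Qed.

Lemma choose_K d : (0 < d)%N -> exists s K, [/\ (expn 2 s <= K * K.+1)%N, (d <= expn 2 s)%N &
   ((K.+1 * K.+1) <= 4 * d)%N].
Proof.
move=> d0.
case: (ltnP d 4) => d4.
  case: d d0 d4 => [|[|[|[|]]]] // _ _.
  - by exists 0%N, 1%N.
  - by exists 1%N, 1%N.
  - by exists 2%N, 2%N.
exists (up_log 2 d), (Nat.sqrt (4 * d)).-1.
have := PeanoNat.Nat.sqrt_spec (4 * d) (PeanoNat.Nat.le_0_l _); set q := Nat.sqrt (4 * d); case => q1 q2.
have lt1 : (1 < d)%N by lia.
have up1 := @up_logP 2 d isT.
have up2 := up_log_gtn (isT : (1 < 2)%N) lt1.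
have up0 : (0 < up_log 2 d)%N by rewrite up_log_gt0.
have P2 : (expn 2 (up_log 2 d) = 2 * expn 2 (up_log 2 d).-1)%N by rewrite -expnS prednK.
move: up1 up2 P2; set P := (expn 2 (up_log 2 d))%N; set P' := (expn 2 (up_log 2 d).-1)%N => up1 up2 P2.
have q4 : (4 <= q)%N.
  rewrite leqNgt; apply/negP => q3.
  have : (q.+1 * q.+1 <= 16)%N by nia.
  lia.
split => //; try nia.
Qed.
From Stdlib Require Import Reals.
From Stdlib Require Import Lra.

Lemma exists_n f : f != 0 -> exists n, iter n T f = 1 /\ (n * n <= 4 * (deg f * deg f * deg f))%nat.
Proof.
move=> fn0; set d := deg f.
have sf : size f = d.+1 by rewrite /d /deg prednK // size_poly_gt0.
case: (posnP d) => d0.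
  by exists 0%nat; split => //=; apply: size1_eq1; rewrite sf d0.
have [s [K [HK dP KK]]] := choose_K d0.
have sf' : size (sgm f) = d.+1 by rewrite size_sgm.
have R := main HK sf' dP.
exists (d + K * d)%nat; split; first exact: reach_T.
nia.
Qed.

Close Scope ring_scope.

Theorem theorem3p5 (f : {poly 'F_2}) :
  f != GRing.zero ->
  exists k : nat, is_tau f k /\
    (INR k <= 2 * (INR (deg f) * sqrt (INR (deg f))) + 1)%R.
Proof.
move=> fn0; have [n [Hn Hb]] := exists_n fn0.
have ex : exists k, iter k T f == GRing.one _ by exists n; apply/eqP.
case: (ex_minnP ex) => k /eqP Hk kmin.
exists k; split.
  split => // j Hj E.
  have := kmin j (introT eqP E); lia.
have kn : (k <= n)%nat by apply: kmin; apply/eqP.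
move: Hb; set d := deg f => Hb.
have H1 : (INR k <= INR n)%R by apply: le_INR; apply/leP.
have Hd : (0 <= INR d)%R by apply: pos_INR.
have H2 : (INR n <= 2 * (INR d * sqrt (INR d)))%R.
  apply: Rsqr_incr_0_var.
    have E : Rsqr (2 * (INR d * sqrt (INR d))) = (4 * (INR d * INR d * INR d))%R.
      rewrite /Rsqr.
      have S := sqrt_sqrt (INR d) Hd.
      nra.
    rewrite E /Rsqr.
    move/leP: Hb; rewrite -!multE => Hb.
    have := le_INR _ _ Hb; rewrite !mult_INR.
    have -> : INR 4 = 4%R by simpl; lra.
    done.
  apply: Rmult_le_pos; first lra.
  apply: Rmult_le_pos => //; exact: sqrt_pos.
lra.
Qed.
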